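(* Let $t\ge 1$ and let $S=\{s_0,s_1,\ldots,s_t\}\subseteq BS^{+}(1,3)$ with $s_0=a^{x_0}$ and $s_i=b^{m_i}a^{x_i}$ for $1\le i\le t$, where $x_0,x_1,\dots,x_t\in\mathbb Z$ and $0<m_1<m_2<\cdots<m_t$ are integers; thus $k=|S|=t+1\ge 2$ and $S$ meets each coset $b^{m}a^{\mathbb Z}$ in at most one element. Suppose that $S$ is non-abelian and that the subgroup generated by $T=S\setminus\{s_0\}$ is abelian. Then $|S^2|\geq 4k-4$.
   Context: $BS(1,3)=\langle a,b\mid ab=ba^3\rangle$; $BS^{+}(1,3)=\{b^m a^x: m\in\mathbb{Z}_{\ge 0},\ x\in\mathbb{Z}\}$, with $(b^m a^x)(b^n a^y)=b^{m+n}a^{y+3^n x}$. $S^2=\{st: s,t\in S\}$. A set is non-abelian if the subgroup it generates is non-abelian. *)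

(* Defs.v *)
From mathcomp Require Import all_boot all_order all_algebra.
Set Implicit Arguments. Unset Strict Implicit. Unset Printing Implicit Defensive.
Import Order.TTheory GRing.Theory Num.Theory.
Local Open Scope ring_scope.

(* Elements of BS^+(1,3): b^m a^x is the pair (m, x), m : nat, x : int. *)
Definition bsp := (nat * int)%type.

(* (b^m a^x)(b^n a^y) = b^(m+n) a^(y + 3^n x) *)
Definition bsp_mul (u v : bsp) : bsp :=
  ((u.1 + v.1)%N, v.2 + (3 ^ v.1)%N%:Z * u.2).

Definition sq (S : seq bsp) : seq bsp :=
  undup [seq bsp_mul u v | u <- S, v <- S].

(* BS(1,3) realised faithfully as Z[1/3] ⋊ Z inside int * rat:
   b^m a^x  <->  (m, x), with (m,x)(n,y) = (m+n, y + 3^n x), n : int. *)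
Definition bs := (int * rat)%type.
Definition bs_mul (u v : bs) : bs := (u.1 + v.1, v.2 + (3%:Q ^ v.1) * u.2).
Definition bs_inv (u : bs) : bs := (- u.1, - ((3%:Q ^ (- u.1)) * u.2)).
Definition bs_one : bs := (0, 0).
Definition bs_of (u : bsp) : bs := (Posz u.1, (u.2)%:~R).

Inductive gen (A : bs -> Prop) : bs -> Prop :=
| gen_in g : A g -> gen A g
| gen_one : gen A bs_one
| gen_mul g h : gen A g -> gen A h -> gen A (bs_mul g h)
| gen_inv g : gen A g -> gen A (bs_inv g).

Definition gen_abelian (S : seq bsp) : Prop :=
  forall g h, gen (fun z => exists2 s, s \in S & z = bs_of s) g ->
              gen (fun z => exists2 s, s \in S & z = bs_of s) h ->
              bs_mul g h = bs_mul h g.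

(* Main.v *)
Require Import Defs.
From mathcomp Require Import all_boot all_order all_algebra.
From mathcomp Require Import zify ring.
Import Order.TTheory GRing.Theory Num.Theory.
Local Open Scope ring_scope.

Lemma comm_int (ma mb : nat) (xa xb : int) :
  bs_mul (bs_of (ma,xa)) (bs_of (mb,xb)) = bs_mul (bs_of (mb,xb)) (bs_of (ma,xa)) ->
  xb + (3^mb)%N%:Z * xa = xa + (3^ma)%N%:Z * xb.
Proof.
move/(congr1 snd) => /=; rewrite -!exprnP => H.
apply: (@intr_inj rat); rewrite !rmorphD !rmorphM /=.
by rewrite -[3%:~R]/(3%:R : rat) -!natrX in H.

Qed.

Lemma P_gt1 {n} : (0 < n)%N -> (3^n)%N%:Z - 1 != 0.
Proof.
move=> Hn; rewrite subr_eq0; apply/eqP => /eqP; rewrite -[1]/(1%N%:Z) eqz_nat.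
rewrite -(expn0 3) eqn_exp2l //; lia.
Qed.

Lemma key (xi xj xl : int) (mi mj ml : nat) :
  (0 < mj)%N -> mi = (mj + ml)%N ->
  xl + (3^ml)%N%:Z * xj = xj + (3^mj)%N%:Z * xl ->
  xj + (3^mj)%N%:Z * xi = xi + (3^mi)%N%:Z * xj ->
  xl + (3^ml)%N%:Z * xj = xi.
Proof.
move=> Hj -> K1 K2.
apply/(mulIf (P_gt1 Hj)).
rewrite expnD PoszM in K2.
set Pj := (3^mj)%N%:Z in K1 K2 *; set Pl := (3^ml)%N%:Z in K1 K2 *.
have E : xi * (Pj - 1) = xj * (Pj * Pl - 1).
  apply/eqP; rewrite -subr_eq0.
  have -> : xi*(Pj-1) - xj*(Pj*Pl-1) = (xj + Pj*xi) - (xi + Pj*Pl*xj) by ring.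
  by rewrite K2 subrr.
rewrite E.
have -> : (xl + Pl * xj) * (Pj - 1) = (xl*Pj + Pl*xj*Pj) - (xl + Pl*xj) by ring.
have -> : xj * (Pj * Pl - 1) = (xl*Pj + Pl*xj*Pj) - (xj + Pj*xl) by ring.
by rewrite K1.
Qed.

Lemma lemma2p3 (t : nat) (x : nat -> int) (m : nat -> nat) :
  (1 <= t)%N ->
  (0 < m 1)%N ->
  (forall i, (1 <= i)%N -> (i < t)%N -> (m i < m i.+1)%N) ->
  let s := fun i => if i == 0%N then (0%N, x 0%N) else (m i, x i) in
  let S := [seq s i | i <- iota 0 t.+1] in
  let T := [seq s i | i <- iota 1 t] in
  let k := size S in
  ~ gen_abelian S ->
  gen_abelian T ->
  (4 * k - 4 <= size (sq S))%N.
Proof.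
move=> t1 m1 mono s S T k nab abT.
have sE : forall i, (0 < i)%N -> s i = (m i, x i) by move=> [|i].
have mlt : forall i j, (1 <= i)%N -> (i < j)%N -> (j <= t)%N -> (m i < m j)%N.
  move=> i j Hi; elim: j => [//|j IH] Hij Hj.
  rewrite ltnS leq_eqVlt in Hij; case/orP: Hij => [/eqP Eij|Hij]; first subst j.
    by apply: mono => //; lia.
  apply: ltn_trans (IH Hij _) (mono _ _ _); lia.
have mpos : forall i, (1 <= i <= t)%N -> (0 < m i)%N.
  move=> i /andP[Hi1 Hit]; case: (ltngtP 1 i) => H.
  - by apply: ltn_trans m1 (mlt 1%N i (leqnn 1) H Hit).
  - lia.
  - by rewrite -H.
have minj : forall i j, (1 <= i <= t)%N -> (1 <= j <= t)%N -> m i = m j -> i = j.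
  move=> i j Hi Hj E; case: (ltngtP i j) => // H.
  - by have := mlt i j; lia.
  - by have := mlt j i; lia.
have x0nz : x 0%N != 0.
  apply/eqP => x00; apply: nab => g h Hg Hh.
  have gST : forall z, gen (fun z => exists2 s0, s0 \in S & z = bs_of s0) z ->
                   gen (fun z => exists2 s0, s0 \in T & z = bs_of s0) z.
    move=> z; elim => [w [u uS ->]| |g1 h1 _ IH1 _ IH2| g1 _ IH].
    - case/mapP: uS => i; rewrite mem_iota; case: i => [_ ->|i Hi ->].
        have -> : bs_of (s 0%N) = bs_one by rewrite /s /bs_of /bs_one /= x00 mulr0z.
        exact: gen_one.
      apply: gen_in; exists (s i.+1) => //; apply: map_f; rewrite mem_iota; lia.
    - exact: gen_one.
    - exact: gen_mul.
    - exact: gen_inv.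
  by apply: abT; apply: gST.
pose P n := (3 ^ n)%N%:Z.
have K : forall a b, (1<=a<=t)%N -> (1<=b<=t)%N ->
    x b + P (m b) * x a = x a + P (m a) * x b.
  move=> a b Ha Hb; apply: comm_int.
  have inT : forall c, (1<=c<=t)%N ->
      gen (fun z => exists2 s0, s0 \in T & z = bs_of s0) (bs_of (m c, x c)).
    move=> c Hc; apply: gen_in; exists (s c); last by rewrite sE //; lia.
    apply: map_f; rewrite mem_iota; lia.
  exact: abT (inT a Ha) (inT b Hb).
have keyT : forall i j l, (1<=i<=t)%N -> (1<=j<=t)%N -> (1<=l<=t)%N ->
    m i = (m j + m l)%N -> x l + P (m l) * x j = x i.
  move=> i j l Hi Hj Hl E; apply: (@key _ _ _ _ _ _ (mpos j Hj) E); by apply: K.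
have Pnz : forall n, P n != 0 by move=> n; rewrite /P eqz_nat expn_eq0.
have Px0 : forall n, P n * x 0%N != 0 by move=> n; rewrite mulf_neq0.
have Px0' : forall n, (0 < n)%N -> P n * x 0%N != x 0%N.
  move=> n Hn; rewrite -subr_eq0 -{2}[x 0%N]mul1r -mulrBl mulf_neq0 //.
  exact: P_gt1.
pose A := [:: (0%N, x 0%N + x 0%N)].
pose B := [seq (m i, x i + x 0%N) | i <- iota 1 t].
pose C := [seq (m i, x i + P (m i) * x 0%N) | i <- iota 1 t].
pose D1 := [seq ((m i + m i)%N, x i + P (m i) * x i) | i <- iota 1 t].
pose D2 := [seq ((m i + m i.+1)%N, x i.+1 + P (m i.+1) * x i) | i <- iota 1 t.-1].
pose L := A ++ B ++ C ++ D1 ++ D2.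
have sizeL : size L = (4 * t)%N.
  rewrite /L /A /B /C /D1 /D2 !size_cat !size_map !size_iota /=; lia.
have fin : forall i j, (i <= t)%N -> (j <= t)%N -> bsp_mul (s i) (s j) \in sq S.
  move=> i j Hi Hj; rewrite mem_undup; apply: allpairs_f; apply: map_f;
  rewrite mem_iota; lia.
have subL : {subset L <= sq S}.
  move=> y; rewrite !mem_cat; case/orP => [|/orP[|/orP[|/orP[]]]].
  - rewrite inE => /eqP ->; have := fin 0%N 0%N; rewrite /bsp_mul /= mul1r => H; exact: (H (leq0n _) (leq0n _)).
  - case/mapP => i; rewrite mem_iota => Hi ->.
    have := fin i 0%N; rewrite /bsp_mul sE /= ?mul1r ?addn0; try lia.
    rewrite addrC => H; refine (H _ _); lia.
  - case/mapP => i; rewrite mem_iota => Hi ->.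
    have := fin 0%N i; rewrite /bsp_mul (sE i) /=; try lia.
    move=> H; refine (H _ _); lia.
  - case/mapP => i; rewrite mem_iota => Hi ->.
    have := fin i i; rewrite /bsp_mul sE /=; try lia.
    move=> H; refine (H _ _); lia.
  - case/mapP => i; rewrite mem_iota => Hi ->.
    have := fin i i.+1; rewrite /bsp_mul (sE i.+1) ?(sE i) /=; try lia.
    move=> H; refine (H _ _); lia.
have uL : uniq L.
  have mle : forall i j, (1 <= i)%N -> (i <= j)%N -> (j <= t)%N -> (m i <= m j)%N.
    move=> i j Hi Hij Hj; rewrite leq_eqVlt in Hij; case/orP: Hij => [/eqP->//|Hij].
    exact: ltnW (mlt _ _ Hi Hij Hj).
  have uB : uniq B.
    rewrite map_inj_in_uniq ?iota_uniq // => i j; rewrite !mem_iota => Hi Hj [E1 _].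
    by apply: minj => //; lia.
  have uC : uniq C.
    rewrite map_inj_in_uniq ?iota_uniq // => i j; rewrite !mem_iota => Hi Hj [E1 _].
    by apply: minj => //; lia.
  have uD1 : uniq D1.
    rewrite map_inj_in_uniq ?iota_uniq // => i j; rewrite !mem_iota => Hi Hj [E1 _].
    by apply: minj => //; lia.
  have uD2 : uniq D2.
    rewrite map_inj_in_uniq ?iota_uniq // => i j; rewrite !mem_iota => Hi Hj [E1 _].
    case: (ltngtP i j) => // H.
    - have := mlt i j; have := mlt i.+1 j.+1; lia.
    - have := mlt j i; have := mlt j.+1 i.+1; lia.
  have nA : forall l, (forall z, z \in l -> (0 < z.1)%N) -> ~~ has (mem A) l.
    move=> l Hl; apply/hasPn => -[a b] /Hl /= Ha; rewrite /A mem_seq1.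
    apply/eqP => -[E1 _]; lia.
  have pB : forall z, z \in B -> (0 < z.1)%N.
    move=> z /mapP [i]; rewrite mem_iota => Hi -> /=; apply: mpos; lia.
  have pC : forall z, z \in C -> (0 < z.1)%N.
    move=> z /mapP [i]; rewrite mem_iota => Hi -> /=; have := mpos i; lia.
  have pD1 : forall z, z \in D1 -> (0 < z.1)%N.
    move=> z /mapP [i]; rewrite mem_iota => Hi -> /=; have := mpos i; lia.
  have pD2 : forall z, z \in D2 -> (0 < z.1)%N.
    move=> z /mapP [i]; rewrite mem_iota => Hi -> /=; have := mpos i; lia.
  have BC : ~~ has (mem B) C.
    apply/hasPn => y /mapP [j Hj ->]; apply/mapP => -[i Hi [E1 E2]].
    move: Hi Hj; rewrite !mem_iota => Hi Hj.
    have eij : j = i by apply: minj => //; lia.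
    subst j; have := Px0' (m i) (mpos i ltac:(lia)); lia.
  have BD1 : ~~ has (mem B) D1.
    apply/hasPn => y /mapP [j Hj ->]; apply/mapP => -[i Hi [E1 E2]].
    move: Hi Hj; rewrite !mem_iota => Hi Hj.
    have := keyT i j j ltac:(lia) ltac:(lia) ltac:(lia) ltac:(lia); lia.
  have BD2 : ~~ has (mem B) D2.
    apply/hasPn => y /mapP [j Hj ->]; apply/mapP => -[i Hi [E1 E2]].
    move: Hi Hj; rewrite !mem_iota => Hi Hj.
    have := keyT i j j.+1 ltac:(lia) ltac:(lia) ltac:(lia) ltac:(lia); lia.
  have CD1 : ~~ has (mem C) D1.
    apply/hasPn => y /mapP [j Hj ->]; apply/mapP => -[i Hi [E1 E2]].
    move: Hi Hj; rewrite !mem_iota => Hi Hj.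
    have := keyT i j j ltac:(lia) ltac:(lia) ltac:(lia) ltac:(lia).
    have := Px0 (m i); lia.
  have CD2 : ~~ has (mem C) D2.
    apply/hasPn => y /mapP [j Hj ->]; apply/mapP => -[i Hi [E1 E2]].
    move: Hi Hj; rewrite !mem_iota => Hi Hj.
    have := keyT i j j.+1 ltac:(lia) ltac:(lia) ltac:(lia) ltac:(lia).
    have := Px0 (m i); lia.
  have D12 : ~~ has (mem D1) D2.
    apply/hasPn => y /mapP [j Hj ->]; apply/mapP => -[i Hi [E1 E2]].
    move: Hi Hj; rewrite !mem_iota => Hi Hj.
    case: (ltnP j i) => H.
    - have := mlt j i; have := mle j.+1 i; lia.
    - have := mle i j; have := mlt i j.+1; lia.
  rewrite /L !cat_uniq !has_cat !negb_or uB uC uD1 uD2 BC BD1 BD2 CD1 CD2 D12.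
  rewrite !nA //= => z; rewrite ?mem_cat => /orP[]; try (move/orP=> []); try (move/orP=> []);
    by [apply: pB | apply: pC | apply: pD1 | apply: pD2].
rewrite /k size_map size_iota.
apply: leq_trans (uniq_leq_size uL subL); rewrite sizeL; lia.
Qed.
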